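(* If $\Lambda$ is a quotient group of a group $\Gamma$, then $\mathrm{Lit}(\Lambda)\le\mathrm{Lit}(\Gamma)$.
   Context: $T_1(\Gamma)$ is the space of all $f\colon\Gamma\to\mathbf{C}$ for which there exist $f_1,f_2\colon\Gamma\times\Gamma\to\mathbf{C}$ with $f(x^{-1}y)=f_1(x,y)+f_2(x,y)$ for all $x,y$, $\sup_x\sum_y|f_1(x,y)|<\infty$, $\sup_y\sum_x|f_2(x,y)|<\infty$; $\mathrm{Lit}(\Gamma)=\inf\{p>0:T_1(\Gamma)\subseteq\ell^p(\Gamma)\}\in[0,\infty]$. *)

(* Defs.v *)
From mathcomp Require Import all_boot all_algebra all_classical all_reals all_analysis.
From mathcomp Require Import complex.
Import Normc.

Set Implicit Arguments.
Unset Strict Implicit.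
Unset Printing Implicit Defensive.

Local Open Scope classical_set_scope.
Local Open Scope ring_scope.

Record group_on (G : Type) := GroupOn {
  gmul : G -> G -> G;
  ginv : G -> G;
  gone : G;
  gmulA : forall x y z, gmul x (gmul y z) = gmul (gmul x y) z;
  gmul1g : forall x, gmul gone x = x;
  gmulVg : forall x, gmul (ginv x) x = gone
}.

Definition is_hom (G H : Type) (gG : group_on G) (gH : group_on H) (phi : G -> H) :=
  forall x y, phi (gmul gG x y) = gmul gH (phi x) (phi y).

(* Lambda is a quotient group of Gamma: there is a surjective homomorphism
   Gamma ->> Lambda (equivalently Lambda ≅ Gamma/N for a normal subgroup N). *)
Definition is_quotient_group (G H : Type) (gG : group_on G) (gH : group_on H) :=
  exists phi : G -> H, is_hom gG gH phi /\ forall h, exists g, phi g = h.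

Definition T1 (R : realType) (G : choiceType) (gG : group_on G) (f : G -> R[i]) : Prop :=
  exists (f1 f2 : G -> G -> R[i]),
    (forall x y, f (gmul gG (ginv gG x) y) = f1 x y + f2 x y) /\
    (exists M : R, forall x, (\esum_(y in setT) (normc (f1 x y))%:E <= M%:E)%E) /\
    (exists M : R, forall y, (\esum_(x in setT) (normc (f2 x y))%:E <= M%:E)%E).

Definition in_lp (R : realType) (G : choiceType) (p : R) (f : G -> R[i]) : Prop :=
  (\esum_(x in setT) ((normc (f x)) `^ p)%:E < +oo)%E.

(* Lit(Gamma) = inf { p > 0 : T_1(Gamma) ⊆ ell^p(Gamma) } in [0, +oo]
   (inf of the empty set is +oo). *)
Definition Lit (R : realType) (G : choiceType) (gG : group_on G) : \bar R :=
  ereal_inf [set (p%:E)%E | p in [set p : R | 0 < p /\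
     (forall f : G -> R[i], T1 gG f -> in_lp p f)]].

(* Main.v *)
Require Import Defs.
From mathcomp Require Import all_boot all_algebra all_classical all_reals all_analysis.
From mathcomp Require Import complex.
Import Normc.
Set Implicit Arguments.
Unset Strict Implicit.
Unset Printing Implicit Defensive.
Import order.Order.TTheory GRing.Theory Num.Theory.
Local Open Scope classical_set_scope.
Local Open Scope ring_scope.
Local Open Scope ereal_scope.

Lemma esum_inj_le (R : realType) (A B : choiceType) (F : A -> \bar R)
  (H : B -> \bar R) (h : A -> B) :
  (forall a, 0 <= F a) -> (forall b, 0 <= H b) ->
  (forall a a', F a != 0 -> F a' != 0 -> h a = h a' -> a = a') ->
  (forall a, F a <= H (h a)) ->
  \esum_(a in setT) F a <= \esum_(b in setT) H b.
Proof.
move=> F0 H0 hinj FH.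
set S := [set a | F a != 0].
have -> : \esum_(a in setT) F a = \esum_(a in S) F a.
  rewrite [RHS]esum_mkcond; apply: eq_esum => a _.
  case: ifPn => //; rewrite /S notin_setE /=; by case: eqP.
apply: (@le_trans _ _ (\esum_(a in S) H (h a))); first exact: le_esum.
rewrite -(esum_image S h H); last first.
  move=> a a2; rewrite /S !inE /=; exact: hinj.
rewrite esum_mkcond; apply: le_esum => b _; by case: ifPn.
Qed.
Lemma gmulgV (T : Type) (g : group_on T) x : gmul g x (ginv g x) = gone g.
Proof.
set y := ginv g x.
rewrite -[gmul g x y](gmul1g g) -(gmulVg g y) -gmulA (gmulA g y x y).
by rewrite /y gmulVg gmul1g gmulVg.
Qed.

Lemma gmulg1 (T : Type) (g : group_on T) x : gmul g x (gone g) = x.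
Proof. by rewrite -(gmulVg g x) gmulA gmulgV gmul1g. Qed.

Lemma gcancl (T : Type) (g : group_on T) x a b : gmul g x a = gmul g x b -> a = b.
Proof.
move=> h; rewrite -[a](gmul1g g) -[b](gmul1g g) -(gmulVg g x) -!gmulA.
by rewrite h.
Qed.

Lemma gcancr (T : Type) (g : group_on T) x a b : gmul g a x = gmul g b x -> a = b.
Proof.
move=> h; rewrite -[a](gmulg1 g) -[b](gmulg1 g) -(gmulgV g x) !gmulA.
by rewrite h.
Qed.

Lemma ginv_uniq (T : Type) (g : group_on T) a b : gmul g a b = gone g -> a = ginv g b.
Proof. by move=> h; apply: (@gcancr _ g b); rewrite h gmulVg. Qed.

Lemma ginvK (T : Type) (g : group_on T) x : ginv g (ginv g x) = x.
Proof. by apply/esym/ginv_uniq; rewrite gmulgV. Qed.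

Lemma hom1 (A B : Type) (gA : group_on A) (gB : group_on B) (phi : A -> B) :
  is_hom gA gB phi -> phi (gone gA) = gone gB.
Proof.
move=> h; apply: (@gcancl _ gB (phi (gone gA))).
by rewrite -h gmul1g gmulg1.
Qed.

Lemma homV (A B : Type) (gA : group_on A) (gB : group_on B) (phi : A -> B) :
  is_hom gA gB phi -> forall x, phi (ginv gA x) = ginv gB (phi x).
Proof.
by move=> h x; apply: ginv_uniq; rewrite -h gmulVg (hom1 h).
Qed.

Lemma normc_ge0' (R : realType) (z : R[i]) : (0 <= normc z)%R.
Proof. by case: z => a b; rewrite /normc sqrtr_ge0. Qed.

Theorem proposition3p5 (R : realType) (G L : choiceType)
  (gG : group_on G) (gL : group_on L) :
  is_quotient_group gG gL -> (Lit R gL <= Lit R gG)%E.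
Proof.
move=> [phi [hphi surj]].
have [s hs] := boolp.choice surj.
apply: ereal_inf_le_tmp => _ [p [p0 HG] <-]; exists p => //; split => //.
move=> f [f1 [f2 [hf [[M1 hM1] [M2 hM2]]]]].
pose sel (c : G) := c == s (phi c).
pose g (c : G) := if sel c then f (phi c) else 0%R.
have Tg : T1 gG g.
  exists (fun x y => if sel (gmul gG (ginv gG x) y) then f1 (phi x) (phi y) else 0%R).
  exists (fun x y => if sel (gmul gG (ginv gG x) y) then f2 (phi x) (phi y) else 0%R).
  split.
    move=> x y; rewrite /g; case: ifP => _; last by rewrite addr0.
    by rewrite hphi (homV hphi) hf.
  split.
    exists M1 => x; apply: le_trans (hM1 (phi x)).
    apply: (@esum_inj_le _ _ _ _ _ phi).
    - by move=> y; case: ifP => _; rewrite lee_fin ?normc0 // normc_ge0'.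
    - by move=> y; rewrite lee_fin normc_ge0'.
    - move=> y y'; case: ifP => [/eqP Ey|]; last by rewrite normc0 eqxx.
      case: ifP => [/eqP Ey'|]; last by rewrite normc0 eqxx.
      move=> _ _ Pyy'.
      have Ea : gmul gG (ginv gG x) y = gmul gG (ginv gG x) y'.
        by rewrite Ey Ey' !hphi Pyy'.
      exact: gcancl Ea.
    - by move=> y; case: ifP => _; rewrite lee_fin ?normc0 // normc_ge0'.
  exists M2 => y; apply: le_trans (hM2 (phi y)).
  apply: (@esum_inj_le _ _ _ _ _ phi).
  - by move=> x; case: ifP => _; rewrite lee_fin ?normc0 // normc_ge0'.
  - by move=> x; rewrite lee_fin normc_ge0'.
  - move=> x x'; case: ifP => [/eqP Ex|]; last by rewrite normc0 eqxx.
    case: ifP => [/eqP Ex'|]; last by rewrite normc0 eqxx.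
    move=> _ _ Pxx'.
    have Ea : gmul gG (ginv gG x) y = gmul gG (ginv gG x') y.
      by rewrite Ex Ex' !hphi !(homV hphi) Pxx'.
    have := gcancr Ea => /(congr1 (ginv gG)); rewrite !ginvK; done.
  - by move=> x; case: ifP => _; rewrite lee_fin ?normc0 // normc_ge0'.
have := HG g Tg; rewrite /in_lp => Hg.
apply: le_lt_trans Hg.
apply: (@esum_inj_le _ _ _ _ _ s).
- by move=> a; rewrite lee_fin powR_ge0.
- by move=> a; rewrite lee_fin powR_ge0.
- by move=> a a' _ _ /(congr1 phi); rewrite !hs.
- by move=> a; rewrite /g /sel hs eqxx.
Qed.
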